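(* Let $R\in\{R^L,R^C,R^V\}$ and let $\mathbf{u}$ be any utility profile. If a ballot vector $\mathbf{b}$ is a PNE of $(\mathcal{T},R,\mathbf{u})$, then for every voter $i\in N$ either $b_i=a_i$ or $b_i\in W(\mathbf{b})$.
   Context: Let $C=\{c_1,\dots,c_m\}$ be candidates and $N=\{1,\dots,n\}$ voters, each with an injective utility function $u_i:C\to\mathbb{N}$ inducing $c\succ_i c'$ iff $u_i(c)>u_i(c')$; $a_i$ is $i$'s top candidate. A ballot vector is $\mathbf{b}=(b_1,\dots,b_n)$ with $b_i\in C\cup\{\bot\}$ ($\bot$ = abstain); $(\mathbf{b}_{-i},b')$ replaces $b_i$ by $b'$. $\mathrm{sc}(c,\mathbf{b})=|\{i:b_i=c\}|$, $M(\mathbf{b})=\max_c\mathrm{sc}(c,\mathbf{b})$, $W(\mathbf{b})=\{c:\mathrm{sc}(c,\mathbf{b})=M(\mathbf{b})\}$ (equal to $C$ if all abstain). If $|W(\mathbf{b})|=1$ its element wins; otherwise: $R^L$ picks the $c_j\in W(\mathbf{b})$ with smallest index; $R^C$ picks uniformly at random from $W(\mathbf{b})$; $R^V$ picks a uniformly random voter $i\in N$ and outputs $b_i$ if $b_i\in W(\mathbf{b})$, else $i$'s most preferred candidate in $W(\mathbf{b})$. Let $p_j(\mathbf{b})$ be the probability that $c_j$ wins. Fix $0<\varepsilon<\min\{1/m,1/n\}$. In the truth-biased setting $\mathcal{T}$, voter $i$'s utility is $U_i(\mathbf{b})=\sum_jp_j(\mathbf{b})u_i(c_j)$ if $b_i\in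 C\setminus\{a_i\}$, $\sum_jp_j(\mathbf{b})u_i(c_j)+\varepsilon$ if $b_i=a_i$, and $-\infty$ if $b_i=\bot$. The game $(\mathcal{T},R,\mathbf{u})$ has players $N$ with action sets $C\cup\{\bot\}$. A PNE is a ballot vector $\mathbf{b}$ with $U_i(\mathbf{b})\ge U_i(\mathbf{b}_{-i},b')$ for all $i\in N$ and $b'\in C\cup\{\bot\}$. *)

(* Defs.v *)
From mathcomp Require Import all_boot all_order all_algebra.
Set Implicit Arguments. Unset Strict Implicit. Unset Printing Implicit Defensive.
Import Order.TTheory GRing.Theory Num.Theory.
Local Open Scope ring_scope.

(* Candidates are 'I_m (c_j has index j), voters are 'I_n.
   A ballot is an option 'I_m, where None stands for abstention (bot). *)
Definition ballots (n m : nat) := 'I_n -> option 'I_m.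

Definition profile (n m : nat) := 'I_n -> 'I_m -> nat.

Definition upd n m (b : ballots n m) (i : 'I_n) (b' : option 'I_m) : ballots n m :=
  fun j => if j == i then b' else b j.

Definition sc n m (b : ballots n m) (c : 'I_m) : nat := #|[set j | b j == Some c]|.
Definition Mx n m (b : ballots n m) : nat := (\max_(c : 'I_m) sc b c)%N.
(* W(b); equals the whole candidate set when everybody abstains *)
Definition W n m (b : ballots n m) : {set 'I_m} := [set c | sc b c == Mx b].

Definition is_top n m (u : profile n m) (i : 'I_n) (c : 'I_m) : bool :=
  [forall c', (u i c' <= u i c)%N].
Definition is_top_in n m (u : profile n m) (i : 'I_n) (S : {set 'I_m}) (c : 'I_m) : bool :=
  (c \in S) && [forall c' in S, (u i c' <= u i c)%N].

Inductive rule := RL | RC | RV.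

Definition winprob n m (R : rule) (u : profile n m) (b : ballots n m) (j : 'I_m) : rat :=
  if #|W b| == 1%N then (j \in W b)%:R else
  match R with
  | RL => ((j \in W b) && [forall k in W b, (j <= k)%N])%:R
  | RC => (j \in W b)%:R / #|W b|%:R
  | RV => #|[set i : 'I_n | if b i is Some c then
                              (if c \in W b then c == j else is_top_in u i (W b) j)
                            else is_top_in u i (W b) j]|%:R / n%:R
  end.

(* U_i(b) in the truth-biased setting; None stands for -infinity *)
Definition Util n m (R : rule) (u : profile n m) (eps : rat) (b : ballots n m) (i : 'I_n)
  : option rat :=
  match b i with
  | None => None
  | Some c => Some (\sum_(j : 'I_m) winprob R u b j * (u i j)%:R
                    + (if is_top u i c then eps else 0))
  end.

Definition ext_le (x y : option rat) : bool :=
  match x, y with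
  | None, _ => true
  | Some _, None => false
  | Some a, Some b => a <= b
  end.

Definition is_PNE n m (R : rule) (u : profile n m) (eps : rat) (b : ballots n m) : Prop :=
  forall (i : 'I_n) (b' : option 'I_m), ext_le (Util R u eps (upd b i b') i) (Util R u eps b i).

(* Main.v *)
Require Import Defs.
From mathcomp Require Import all_boot all_order all_algebra.
From mathcomp Require Import lra.
Import Order.TTheory GRing.Theory Num.Theory.
Set Implicit Arguments. Unset Strict Implicit. Unset Printing Implicit Defensive.
Local Open Scope ring_scope.
Lemma W_ne n m (b : ballots n m) : (0 < m)%N -> exists c0, c0 \in W b.
Proof.
move=> hm; have [c0 Hc0] := @bigop.eq_bigmax _ (sc b) (ltac:(by rewrite card_ord)).
by exists c0; rewrite inE /Mx Hc0.
Qed.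

Lemma sumB (m : nat) (P : pred 'I_m) :
  \sum_(j : 'I_m) ((P j)%:R : rat) = (#|P|)%:R.
Proof.
rewrite -natr_sum -sum1_card; congr _%:R.
by rewrite [RHS]big_mkcond /=; apply: eq_bigr => j _; rewrite unfold_in; case: (P j).
Qed.

Lemma card_is1 (T : finType) (P : pred T) (j0 : T) :
  (forall j, P j = (j == j0)) -> #|P| = 1%N.
Proof.
move=> H; rewrite -(cards1 j0); apply: eq_card => j; by rewrite in_set1 unfold_in H.
Qed.

Lemma top_in_uniq n m (u : profile n m) k S j1 j2 :
  injective (u k) -> is_top_in u k S j1 -> is_top_in u k S j2 -> j1 = j2.
Proof.
move=> hi /andP[h1 /forall_inP f1] /andP[h2 /forall_inP f2].
apply: hi; apply/eqP; rewrite eqn_leq; by rewrite f1 // f2.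
Qed.

Lemma top_in_ex n m (u : profile n m) k (S : {set 'I_m}) c0 :
  injective (u k) -> c0 \in S -> exists j0, forall j, is_top_in u k S j = (j == j0).
Proof.
move=> hi hc0.
case: (@arg_maxnP _ c0 (mem S) (u k) hc0) => j0 hj0 hmax.
exists j0 => j; apply/idP/eqP.
  move=> hj; apply: (top_in_uniq hi hj); apply/andP; split => //.
  by apply/forall_inP.
by move=> ->; apply/andP; split => //; apply/forall_inP.
Qed.

Definition sel n m (u : profile n m) (b : ballots n m) (k : 'I_n) (j : 'I_m) : bool :=
  if b k is Some c then (if c \in W b then c == j else is_top_in u k (W b) j)
  else is_top_in u k (W b) j.

Lemma sel_W n m u (b : ballots n m) k j : sel u b k j -> j \in W b.
Proof.
rewrite /sel; case: (b k) => [c|]; last by case/andP.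
by case: ifP => [hc /eqP <- // | _ /andP[]].
Qed.

Lemma sel_ex n m u (b : ballots n m) k : (0 < m)%N -> injective (u k) ->
  exists j0, forall j, sel u b k j = (j == j0).
Proof.
move=> hm hi; have [c0 hc0] := W_ne b hm.
rewrite /sel; case: (b k) => [c|]; last exact: top_in_ex hc0.
case: (c \in W b); last exact: top_in_ex hc0.
by exists c => j; rewrite eq_sym.
Qed.

Lemma wp1 n m R u (b : ballots n m) j : #|W b| == 1%N ->
  winprob R u b j = (j \in W b)%:R.
Proof. by rewrite /winprob => ->. Qed.

Lemma wpRL n m u (b : ballots n m) j : #|W b| != 1%N ->
  winprob RL u b j = ((j \in W b) && [forall k in W b, (j <= k)%N])%:R.
Proof. by rewrite /winprob => /negbTE ->. Qed.

Lemma wpRC n m u (b : ballots n m) j : #|W b| != 1%N ->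
  winprob RC u b j = (j \in W b)%:R / #|W b|%:R.
Proof. by rewrite /winprob => /negbTE ->. Qed.

Lemma winprobRV n m u (b : ballots n m) j : #|W b| != 1%N ->
  winprob RV u b j = #|[set k | sel u b k j]|%:R / n%:R.
Proof. by rewrite /winprob => /negbTE ->. Qed.

Lemma wp_ge0 n m R u (b : ballots n m) j : 0 <= winprob R u b j.
Proof.
rewrite /winprob; case: ifP => // _; case: R => //; by rewrite divr_ge0.
Qed.

Lemma wp_le1 n m R u (b : ballots n m) j : (0 < n)%N -> (0 < m)%N ->
  winprob R u b j <= 1.
Proof.
move=> hn hm; have [c0 hc0] := W_ne b hm.
have hW : (0 < #|W b|)%N by apply/card_gt0P; exists c0.
rewrite /winprob; case: ifP => _; first by rewrite lern1 leq_b1.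
case: R; first by rewrite lern1 leq_b1.
  rewrite ler_pdivrMr ?ltr0n // mul1r ler_nat; by case: (_ \in _).
rewrite ler_pdivrMr ?ltr0n // mul1r ler_nat.
by apply: leq_trans (max_card _) _; rewrite card_ord.
Qed.

Lemma wp_out n m R u (b : ballots n m) j : j \notin W b -> winprob R u b j = 0.
Proof.
move=> hj; rewrite /winprob (negbTE hj); case: ifP => // _; case: R => //.
  by rewrite mul0r.
suff -> : [set k | if b k is Some c then (if c \in W b then c == j else is_top_in u k (W b) j)
                            else is_top_in u k (W b) j] = set0 by rewrite cards0 mul0r.
apply/setP => k; rewrite !inE; apply/negP => H.
by move: (sel_W H); rewrite (negbTE hj).
Qed.

Lemma wp_sum n m R u (b : ballots n m) : (0 < n)%N -> (0 < m)%N ->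
  (forall i, injective (u i)) ->
  \sum_j winprob R u b j = 1.
Proof.
move=> hn hm hinj; have [c0 hc0] := W_ne b hm.
have hW : (0 < #|W b|)%N by apply/card_gt0P; exists c0.
case: (eqVneq #|W b| 1%N) => h1.
  by rewrite (eq_bigr _ (fun j _ => @wp1 _ _ R u b j (introT eqP h1))) (sumB (mem (W b))) h1.
case: R.
- rewrite (eq_bigr _ (fun j _ => @wpRL _ _ u b j h1)) (sumB (fun j => (j \in W b) && [forall k in W b, (j <= k)%N])).
  case: (@arg_minnP _ c0 (mem (W b)) val hc0) => j0 hj0 hmin.
  rewrite (@card_is1 _ _ j0) // => j; apply/idP/eqP.
    case/andP => hj /forall_inP hk; apply: val_inj; apply/eqP.
    by rewrite eqn_leq hk // hmin.
  by move=> ->; apply/andP; split => //; apply/forall_inP.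
- rewrite (eq_bigr _ (fun j _ => @wpRC _ _ u b j h1)) -mulr_suml (sumB (mem (W b))) divff //.
  by rewrite pnatr_eq0 -lt0n.
- rewrite (eq_bigr _ (fun j _ => @winprobRV _ _ u b j h1)) -mulr_suml -natr_sum.
  have -> : (\sum_(j : 'I_m) #|[set k | sel u b k j]| = n)%N.
    under eq_bigr => j _ do rewrite -sum1dep_card big_mkcond /=.
    rewrite exchange_big /=.
    rewrite -[n in RHS]card_ord -sum1_card; apply: eq_bigr => k _.
    have [j0 hj0] := @sel_ex _ _ u b k hm (hinj k).
    rewrite -big_mkcond /= sum1dep_card.
    rewrite (_ : [set x | sel u b k x] = [set j0]) ?cards1 //; apply/setP => j; by rewrite !inE hj0.
  by rewrite divff // pnatr_eq0 -lt0n.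
Qed.
Lemma sc_a n m (b : ballots n m) i c a : b i = Some c -> c != a ->
  sc (upd b i (Some a)) a = (sc b a).+1.
Proof.
move=> hbi hca; rewrite /sc.
rewrite (_ : [set j | upd b i (Some a) j == Some a] = i |: [set j | b j == Some a]).
  by rewrite cardsU1 inE hbi (inj_eq (@Some_inj _)) (negbTE hca).
apply/setP => j; rewrite !inE /upd; case: (eqVneq j i) => [->|//].
by rewrite eqxx.
Qed.

Lemma sc_le n m (b : ballots n m) i a d : d != a ->
  (sc (upd b i (Some a)) d <= sc b d)%N.
Proof.
move=> hda; rewrite /sc; apply: subset_leq_card; apply/subsetP => j.
rewrite !inE /upd; case: (eqVneq j i) => // _.
by rewrite (inj_eq (@Some_inj _)) eq_sym (negbTE hda).
Qed.

Lemma sc_eq n m (b : ballots n m) i c a d : b i = Some c -> d != a -> d != c ->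
  sc (upd b i (Some a)) d = sc b d.
Proof.
move=> hbi hda hdc; rewrite /sc; apply: eq_card => j.
rewrite !inE /upd; case: (eqVneq j i) => // ->.
by rewrite hbi !(inj_eq (@Some_inj _)) ![_ == d]eq_sym (negbTE hda) (negbTE hdc).
Qed.

Lemma sc_leM n m (b : ballots n m) d : (sc b d <= Mx b)%N.
Proof. exact: (@leq_bigmax _ (sc b)). Qed.

Lemma W_struct n m (b : ballots n m) i c a j : (0 < m)%N ->
  b i = Some c -> c \notin W b -> c != a -> j != a -> j \in W (upd b i (Some a)) ->
  [/\ a \notin W b, W b \subset W (upd b i (Some a)) &
      forall d, d \in W (upd b i (Some a)) -> d != a -> d \in W b].
Proof.
move=> hm hbi hc hca hja hj.
set b' := upd b i (Some a).
have hM1 : (Mx b' <= Mx b)%N.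
  move: hj; rewrite inE => /eqP <-.
  exact: leq_trans (sc_le b i hja) (sc_leM b j).
have [c0 hc0] := W_ne b hm.
have hc0c : c0 != c by apply: contraNneq hc => <-.
have hM2 : (Mx b <= Mx b')%N.
  move: (hc0); rewrite inE => /eqP <-.
  case: (eqVneq c0 a) => [->|h].
    apply: leq_trans (leqnSn _) _; rewrite -(sc_a hbi hca); exact: sc_leM.
  rewrite -(sc_eq hbi h hc0c); exact: sc_leM.
have hM : Mx b' = Mx b by apply/eqP; rewrite eqn_leq hM1 hM2.
have haN : a \notin W b.
  apply/negP; rewrite inE => /eqP ha.
  by have := sc_leM b' a; rewrite (sc_a hbi hca) hM ha ltnn.
split => //.
  apply/subsetP => d hd.
  have hdc : d != c by apply: contraNneq hc => <-.
  have hda : d != a by apply: contraNneq haN => <-.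
  rewrite inE (sc_eq hbi hda hdc) hM; by rewrite inE in hd.
move=> d hd hda; rewrite inE in hd; rewrite inE eqn_leq sc_leM /=.
rewrite -hM -(eqP hd); exact: sc_le.
Qed.

Lemma top_sub n m (u : profile n m) k (S S' : {set 'I_m}) j :
  S \subset S' -> j \in S -> is_top_in u k S' j -> is_top_in u k S j.
Proof.
move=> hs hj /andP[_ /forall_inP h]; apply/andP; split => //.
apply/forall_inP => x hx; apply: h; exact: (subsetP hs).
Qed.

Lemma wp_mono n m R u (b : ballots n m) i c a j : (0 < n)%N -> (0 < m)%N ->
  b i = Some c -> c \notin W b -> j != a ->
  W b \subset W (upd b i (Some a)) ->
  (forall d, d \in W (upd b i (Some a)) -> d != a -> d \in W b) ->
  j \in W (upd b i (Some a)) ->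
  winprob R u (upd b i (Some a)) j <= winprob R u b j.
Proof.
move=> hn hm hbi hc hja hsub hsup hj.
have hjW : j \in W b by apply: hsup.
case: (eqVneq #|W b| 1%N) => h1.
  rewrite [winprob R u b j]wp1 ?h1 // hjW; exact: wp_le1.
have hpos : (0 < #|W b|)%N by apply/card_gt0P; exists j.
have h2 : (1 < #|W b|)%N by rewrite ltn_neqAle eq_sym h1 hpos.
have h1' : #|W (upd b i (Some a))| != 1%N.
  rewrite neq_ltn; apply/orP; right; exact: leq_trans h2 (subset_leq_card hsub).
case: R.
- rewrite wpRL // wpRL // ler_nat.
  case: (boolP (_ && _)) => [/andP[_ /forall_inP hk] | //].
  rewrite hjW /= (_ : [forall k in W b, _] = true) //.
  apply/forall_inP => k hk'; apply: hk; exact: (subsetP hsub).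
- rewrite wpRC // wpRC // hj hjW !mul1r lef_pV2 ?posrE ?ltr0n ?ler_nat //.
    exact: subset_leq_card.
  exact: leq_trans hpos (subset_leq_card hsub).
- rewrite !winprobRV // ler_pM2r ?invr_gt0 ?ltr0n // ler_nat.
  apply: subset_leq_card; apply/subsetP => k; rewrite !inE /sel.
  have E : upd b i (Some a) k = if k == i then Some a else b k by [].
  rewrite E; case: (eqVneq k i) => [->|hki].
    rewrite hbi (negbTE hc); case: ifP => [_ /eqP haj|_].
      by rewrite haj eqxx in hja.
    exact: top_sub.
  case: (b k) => [c'|]; last exact: top_sub.
  case: ifP => hc'W'.
    by move=> /eqP hcj; rewrite hcj hjW eqxx.
  have -> : (c' \in W b) = false.
    by apply/negP => /(subsetP hsub); rewrite hc'W'.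
  exact: top_sub.
Qed.

Lemma wp_key n m R u (b : ballots n m) i c a j : (0 < n)%N -> (0 < m)%N ->
  b i = Some c -> c \notin W b -> c != a -> j != a ->
  winprob R u (upd b i (Some a)) j <= winprob R u b j.
Proof.
move=> hn hm hbi hc hca hja.
case: (boolP (j \in W (upd b i (Some a)))) => hj.
  have [_ hsub hsup] := W_struct hm hbi hc hca hja hj.
  exact: (wp_mono R u hn hm hbi hc hja hsub hsup hj).
rewrite wp_out //; exact: wp_ge0.
Qed.

Lemma dev_le n m R (u : profile n m) (b : ballots n m) i c a :
  (0 < n)%N -> (0 < m)%N -> (forall i, injective (u i)) ->
  b i = Some c -> c \notin W b -> c != a -> (forall j, (u i j <= u i a)%N) ->
  \sum_j winprob R u b j * (u i j)%:R <=
  \sum_j winprob R u (upd b i (Some a)) j * (u i j)%:R.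
Proof.
move=> hn hm hinj hbi hc hca ha.
rewrite -subr_ge0 -sumrB.
apply: le_trans (_ : 0 <= \sum_j (winprob R u (upd b i (Some a)) j - winprob R u b j) * (u i a)%:R) _.
  by rewrite -mulr_suml sumrB !wp_sum // subrr mul0r.
apply: ler_sum => j _; rewrite -mulrBl.
case: (eqVneq j a) => [->|hja] //.
apply: ler_wnM2l; first by rewrite subr_le0; exact: wp_key hbi hc hca hja.
by rewrite ler_nat.
Qed.
Theorem proposition2 (n m : nat) (R : rule) (u : profile n m) (eps : rat)
  (hn : (0 < n)%N) (hm : (0 < m)%N)
  (hinj : forall i : 'I_n, injective (u i))
  (heps0 : 0 < eps) (heps1 : eps < m%:R^-1) (heps2 : eps < n%:R^-1)
  (b : ballots n m) :
  is_PNE R u eps b ->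
  forall i : 'I_n, exists c : 'I_m, b i = Some c /\ (is_top u i c \/ c \in W b).
Proof.
move=> hP i.
have E : forall x, upd b i x i = x by move=> x; rewrite /upd eqxx.
case hbi: (b i) => [c|]; last first.
  by have := hP i (Some (Ordinal hm)); rewrite /Util E hbi.
case: (boolP (is_top u i c)) => htop; first by exists c; split => //; left.
case: (boolP (c \in W b)) => hcW; first by exists c; split => //; right.
exfalso.
case: (@arg_maxnP _ (Ordinal hm) xpredT (u i) isT) => a _ hamax.
have ha : forall j, (u i j <= u i a)%N by move=> j; exact: hamax.
have htopa : is_top u i a by apply/forallP.
have hca : c != a by apply: contraNneq htop => ->.
have := hP i (Some a); rewrite /Util E hbi htopa (negbTE htop) /= addr0.
have D := dev_le R hn hm hinj hbi hcW hca ha.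
move=> H. lra.
Qed.
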